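(* Let $p$ be a prime and $n$ a positive integer. Let $\overline{m}=\min\{m\in\mathbb{N} : v_p((pm)!)\geq n\}$. Then $$\mathcal{Q}_n=\big(q_{n,0}G_0(X),\,q_{n,1}G_1(X),\dots,q_{n,\overline{m}}G_{\overline{m}}(X)\big),$$ where $q_{n,m}=p^{\,n-v_p((pm)!)}$ for $0\leq m<\overline{m}$ and $q_{n,\overline{m}}=1$. More generally, for each $j\in\{0,\dots,p-1\}$, $$\mathcal{Q}_{n,j}=\big(q_{n,0}G_0(X-j),\dots,q_{n,\overline{m}}G_{\overline{m}}(X-j)\big).$$
   Context: Fix a prime $p$ and $n\geq1$. For $j\in\{0,\dots,p-1\}$, $\mathcal{Q}_{n,j}=\bigcap_{i\in\{0,\dots,p^n-1\},\ i\equiv j\ (\mathrm{mod}\ p)}(p^n,X-i)\subseteq\mathbb{Z}[X]$, and $\mathcal{Q}_n=\mathcal{Q}_{n,0}$. For $k\geq1$, $G_k(X)=\prod_{h=0}^{k-1}(X-hp)$, and $G_0(X)=1$. $v_p$ is the $p$-adic valuation. *)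

(* Defs.v *)
From HB Require Import structures.
From mathcomp Require Import all_boot all_order all_algebra.
Set Implicit Arguments. Unset Strict Implicit. Unset Printing Implicit Defensive.
Import Order.TTheory GRing.Theory Num.Theory.
Local Open Scope ring_scope.

Definition in_ideal (s : seq {poly int}) (f : {poly int}) : Prop :=
  exists c : nat -> {poly int}, f = \sum_(i < size s) c i * s`_i.

Definition in_Qnj (p n j : nat) (f : {poly int}) : Prop :=
  forall i : nat, (i < p ^ n)%N -> (i %% p = j %% p)%N ->
    in_ideal [:: ((p ^ n)%N%:R)%:P; 'X - (i%:R)%:P] f.

Definition G (p k : nat) : {poly int} :=
  \prod_(h < k) ('X - ((h * p)%N%:R)%:P).

Definition q (p n mbar m : nat) : int :=
  if (m < mbar)%N then ((p ^ (n - logn p (p * m)`!))%N)%:R else 1.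

Definition gens (p n mbar j : nat) : seq {poly int} :=
  [seq (q p n mbar m)%:P * (G p m \Po ('X - (j%:R)%:P)) | m <- iota 0 mbar.+1].

(* Main.v *)
Require Import Defs.
From HB Require Import structures.
From mathcomp Require Import all_boot all_order all_algebra.
From mathcomp Require Import zify ring.
Import Order.TTheory GRing.Theory Num.Theory.
Local Open Scope ring_scope.

Lemma legendre (p m : nat) : prime p -> logn p (p * m)`! = (m + logn p m`!)%N.
Proof.
move=> hp; have p0 := prime_gt0 hp.
elim: m => [|m IH]; first by rewrite muln0 logn1.
have hle : (p * m <= p * m.+1)%N by rewrite leq_mul2l ltnW ?orbT.
rewrite (fact_split hle).
have E : (p * m.+1).+1 = (p * m.+1 - 1).+1.+1 by lia.
rewrite E big_nat_recr /=; last by nia.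
have -> : (p * m.+1 - 1).+1 = (p * m.+1)%N by lia.
set X := \prod_(_ <= _ < _) _.
have X0 : (0 < X)%N.
  by rewrite /X big_seq_cond prodn_cond_gt0 // => i /andP[]; rewrite mem_index_iota; lia.
have XC : logn p X = 0%N.
  apply: logn_coprime; rewrite prime_coprime // Euclid_dvd_prod //.
  rewrite big1_seq // => i /andP[_]; rewrite mem_index_iota => /andP[h1 h2].
  apply/negP => /dvdnP[k hk]; subst i.
  case: (leqP k m) => hkm.
    have : (k * p <= m * p)%N by rewrite leq_mul2r hkm orbT.
    lia.
  have : (m.+1 * p <= k * p)%N by rewrite leq_mul2r hkm orbT.
  lia.
rewrite !lognM ?fact_gt0 ?muln_gt0 ?p0 //.
rewrite IH XC -/(factorial m) -/(m`!) (logn_prime p hp) eqxx; lia.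
by rewrite X0.
Qed.
Lemma dvdz_nat (d m : nat) : ((d%:R : int) %| m%:R)%Z = (d %| m)%N.
Proof. by rewrite dvdzE !natz. Qed.

Lemma dvd_cancel (p n N : nat) (a : int) : prime p -> (0 < N)%N ->
  (((p ^ n)%N%:R : int) %| a * N%:R)%Z -> (((p ^ (n - logn p N))%N%:R : int) %| a)%Z.
Proof.
move=> hp N0; rewrite !dvdzE abszM !natz /=.

case: (pfactor_coprime hp N0) => N' cN' E.
set v := logn p N. rewrite E.
rewrite mulnA mulnAC Gauss_dvdl; last by rewrite coprimeXl.
case: (leqP (v) n) => hv.
  by rewrite -{1}(subnK hv) expnD dvdn_pmul2r // expn_gt0 prime_gt0.
by have -> : (n - v = 0)%N by lia.
Qed.

Lemma dvd_part (p n N : nat) : prime p -> (0 < N)%N ->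
  ((p ^ n) %| (p ^ (n - logn p N)) * N)%N.
Proof.
move=> hp N0; apply: (dvdn_trans _ (dvdn_mul (dvdnn _) (pfactor_dvdnn p N))).
by rewrite -expnD dvdn_exp2l //; lia.
Qed.
Definition cc (p j h : nat) : int := (j + h * p)%N%:R.
Definition PP (p j m : nat) : {poly int} := \prod_(h < m) ('X - (cc p j h)%:P).

Lemma Gcomp p j m : G p m \Po ('X - (j%:R)%:P) = PP p j m.
Proof.
rewrite /G /PP; elim: m => [|m IH]; first by rewrite !big_ord0 comp_polyC.
rewrite !big_ord_recr /= comp_polyM IH comp_polyB comp_polyX comp_polyC.
by rewrite /cc natrD polyCD opprD addrA.
Qed.

Lemma PP_eval p j m k : (PP p j m).[(j + k * p)%N%:R] = (p ^ m * k ^_ m)%N%:R.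
Proof.
rewrite /PP; elim: m => [|m IH]; first by rewrite big_ord0 hornerC expn0.
rewrite big_ord_recr /= hornerM IH hornerXsubC /cc ffactnSr.
case: (leqP m k) => hmk.
  rewrite -natrB; last by nia.
  rewrite -natrM; congr (_%:R); rewrite expnS.
  have -> : (j + k * p - (j + m * p) = (k - m) * p)%N by rewrite mulnBl; lia.
  lia.
by rewrite ffact_small // !muln0 mul0r.
Qed.

Lemma dvd_eval (d : int) (f : {poly int}) (x y : int) :
  (d %| x - y)%Z -> (d %| f.[x] - f.[y])%Z.
Proof.
move=> h.
have /factor_theorem [g hg] : root (f - f.[y]%:P) y.
  by rewrite /root hornerD hornerN hornerC subrr.
have : (f - f.[y]%:P).[x] = g.[x] * (x - y) by rewrite hg hornerM hornerXsubC.
rewrite hornerD hornerN hornerC => ->.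
exact: dvdz_mull.
Qed.

Lemma ideal2 (d : int) (f : {poly int}) (x : int) :
  (d %| f.[x])%Z -> in_ideal [:: d%:P; 'X - x%:P] f.
Proof.
move=> /dvdzP [e he].
have /factor_theorem [g hg] : root (f - f.[x]%:P) x.
  by rewrite /root hornerD hornerN hornerC subrr.
exists (fun i => if i == 0%N then e%:P else g).
rewrite /= !big_ord_recl big_ord0 /= addr0 -hg he polyCM; ring.
Qed.

Lemma ideal2_inv (d : int) (f : {poly int}) (x : int) :
  in_ideal [:: d%:P; 'X - x%:P] f -> (d %| f.[x])%Z.
Proof.
move=> [c ->]; rewrite /= !big_ord_recl big_ord0 /= addr0.
rewrite hornerD !hornerM hornerXsubC hornerC subrr mulr0 addr0.
exact: dvdz_mull.
Qed.

Lemma decomp p j M (f : {poly int}) : exists (Q : {poly int}) (a : nat -> int),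
  f = Q * PP p j M + \sum_(m < M) (a m)%:P * PP p j m.
Proof.
elim: M => [|M [Q [a IH]]].
  by exists f, (fun _ => 0); rewrite /PP !big_ord0 mulr1 addr0.
have /factor_theorem [Q' hQ'] : root (Q - Q.[cc p j M]%:P) (cc p j M).
  by rewrite /root hornerD hornerN hornerC subrr.
exists Q', (fun m => if m == M then Q.[cc p j M] else a m).
rewrite big_ord_recr /= eqxx.
rewrite (eq_bigr (fun m : 'I_M => (a m)%:P * PP p j m)); last first.
  by move=> i _; rewrite ifN // neq_ltn ltn_ord.
have PS : PP p j M.+1 = PP p j M * ('X - (cc p j M)%:P) by rewrite /PP big_ord_recr.
rewrite PS {1}IH.
have EQ : Q = Q' * ('X - (cc p j M)%:P) + Q.[cc p j M]%:P by rewrite -hQ' subrK.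
set c := Q.[_] in EQ *.
rewrite {1}EQ; ring.
Qed.

Lemma gens_nth p n mbar j i : (i < mbar.+1)%N ->
  (gens p n mbar j)`_i = (q p n mbar i)%:P * PP p j i.
Proof.
by move=> hi; rewrite /gens (nth_map 0%N) ?size_iota // nth_iota // add0n Gcomp.
Qed.

Lemma logn_pm p m : prime p -> logn p (p ^ m * m`!)%N = logn p (p * m)`!.
Proof.
move=> hp; rewrite legendre // lognM ?fact_gt0 ?expn_gt0 ?prime_gt0 //.
by rewrite pfactorK.
Qed.

Theorem mainTheorem16 (p n mbar : nat) (hp : prime p) (hn : (0 < n)%N)
  (hmbar : (n <= logn p (p * mbar)`!)%N)
  (hmin : forall m : nat, (m < mbar)%N -> (logn p (p * m)`! < n)%N) :
  forall j : nat, (j < p)%N ->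
    forall f : {poly int}, in_Qnj p n j f <-> in_ideal (gens p n mbar j) f.
Proof.
move=> j hj f; have p0 := prime_gt0 hp.
have pn0 : (0 < p ^ n)%N by rewrite expn_gt0 p0.
split.
- move=> hQ.
  have hdiv : forall k, (((p ^ n)%N%:R : int) %| f.[(j + k * p)%N%:R])%Z.
    move=> k; set x := (j + k * p)%N.
    have hi : (x %% p ^ n < p ^ n)%N by rewrite ltn_pmod.
    have hij : ((x %% p ^ n) %% p = j %% p)%N.
      by rewrite modn_dvdm ?dvdn_exp // /x addnC modnMDl.
    have h2 := @ideal2_inv _ _ _ (hQ _ hi hij).
    rewrite -(subrK f.[(x %% p ^ n)%:R] f.[x%:R]) rpredD //.
    apply: dvd_eval; rewrite {1}(divn_eq x (p ^ n)) natrD addrK natrM.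
    exact: dvdz_mull (dvdzz _).
  have [Q [a hf]] := decomp p j mbar f.
  have key : forall k, (k < mbar)%N ->
      (((p ^ n)%N%:R : int) %| a k * (p ^ k * k`!)%N%:R)%Z.
    elim/ltn_ind => k IH hk.
    have := hdiv k.
    rewrite hf hornerD horner_sum hornerM PP_eval ffact_small // muln0 mulr0 add0r.
    under eq_bigr => m _ do rewrite hornerM hornerC PP_eval.
    rewrite (bigD1 (Ordinal hk)) //= ffactnn => h.
    set S := \sum_(i < mbar | _) _ in h.
    have hs : (((p ^ n)%N%:R : int) %| S)%Z.
      apply: rpred_sum => m hm.
      case: (ltngtP m k) => hmk.
      + rewrite -bin_ffact (mulnC 'C(k, m)) mulnA natrM mulrA.
        by apply: dvdz_mulr; apply: IH => //; apply: ltn_trans hk.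
      + by rewrite ffact_small // muln0 mulr0 rpred0.
      + by move: hm; rewrite -val_eqE /= hmk eqxx.
    by rewrite -(addrK S (a k * _)) rpredB.
  pose b m := (a m %/ q p n mbar m)%Z.
  exists (fun i => if (i < mbar)%N then (b i)%:P else Q).
  rewrite size_map size_iota big_ord_recr /= ltnn gens_nth //.
  rewrite /q ltnn mul1r hf addrC; congr (_ + _).
  apply: eq_bigr => i _; rewrite ltn_ord (gens_nth _ _ _ _ _ (leqW (ltn_ord i))).
  rewrite /q ltn_ord mulrA -polyCM; congr (_%:P * _).
  apply/esym/eqP; rewrite /b /q ltn_ord -dvdz_eq -logn_pm //.
  apply: dvd_cancel => //; first by rewrite muln_gt0 expn_gt0 p0 fact_gt0.
  exact: key.
- move=> [c hc] i hi hij; apply: ideal2.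
  rewrite hc horner_sum; apply: rpred_sum => m _.
  rewrite hornerM; apply: dvdz_mull.
  have hs : size (gens p n mbar j) = mbar.+1 by rewrite size_map size_iota.
  have hm : (m < mbar.+1)%N by rewrite -hs ltn_ord.
  have Ei : i = (j + (i %/ p) * p)%N.
    by rewrite {1}(divn_eq i p) hij modn_small // addnC.
  rewrite gens_nth // hornerM hornerC Ei PP_eval -bin_ffact.
  have hpos : (0 < p ^ m * m`!)%N by rewrite muln_gt0 expn_gt0 p0 fact_gt0.
  have hdv : (p ^ m * m`! %| p ^ m * ('C(i %/ p, m) * m`!))%N.
    by apply: dvdn_mul (dvdnn _) (dvdn_mull _ (dvdnn _)).
  rewrite /q; case: ifP => hlt.
    rewrite -natrM dvdz_nat; apply: dvdn_trans (dvd_part p n _ hp hpos) _.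
    by rewrite logn_pm //; apply: dvdn_mul (dvdnn _) hdv.
  have Em : m = mbar :> nat by move: hm hlt; rewrite ltnS leq_eqVlt => /orP[/eqP|->].
  rewrite Em in hdv *.
  rewrite mul1r dvdz_nat; apply: dvdn_trans _ hdv.
  apply: dvdn_trans (pfactor_dvdnn p _).
  by rewrite dvdn_exp2l // logn_pm.
Qed.
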